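(* Let $S=\mathcal{M}[G;I,\Lambda;P]$ be a Rees matrix semigroup where $G$ is a finitely generated group, $I=\{i_1,\ldots,i_n\}$ and $\Lambda=\{\lambda_1,\ldots,\lambda_m\}$ are finite, and $P=(p_{\lambda,i})_{\lambda\in\Lambda,i\in I}$ is an $m\times n$ matrix with entries in $G$. Then the right ends of $S$ (the poset $\Omega S$) form an anti-chain of cardinality $n\cdot|\Omega G|$, and the left ends of $S$ form an anti-chain of cardinality $m\cdot|\Omega G|$.
   Context: The Rees matrix semigroup $\mathcal{M}[G;I,\Lambda;P]$ is the set $I\times G\times\Lambda$ with multiplication $(i,g,\lambda)(j,h,\mu)=(i,g\,p_{\lambda,j}\,h,\mu)$. A digraph on $\Omega$ is a subset $\Gamma\subseteq\Omega\times\Omega$. A path is a sequence of pairwise distinct vertices $(v_0,v_1,\ldots)$ with $(v_i,v_{i+1})\in\Gamma$ (length 0 allowed); a ray is an infinite path; an anti-ray is an infinite sequence of distinct vertices with $(v_{i+1},v_i)\in\Gamma$. For infinite $\Sigma',\Sigma\subseteq\Omega$, $\Sigma'\preccurlyeq\Sigma$ means there are infinitely many pairwise vertex-disjoint paths from vertices of $\Sigma'$ to vertices of $\Sigma$. On rays and anti-rays $\preccurlyeq$ is a preorder with associated equivalence $\approx$; the ends are the $\approx$-classes of rays and anti-rays, and $\Omega\Gamma$ is the poset of ends. The right Cayley graph $\Gamma_r(S,A)$ has vertex set $S$ and edges $(x,xa)$; the left Cayley graph $\Gamma_l(S,A)$ has edges $(x,ax)$, for $x\in S$, $a\in A$. For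 a finitely generated semigroup $S$, the right ends $\Omega S$ are $\Omega\Gamma_r(S,A)$ and the left ends are $\Omega\Gamma_l(S,A)$ for any finite generating set $A$ (well defined up to isomorphism). For the group $G$, $\Omega G$ denotes its right ends as a semigroup. An anti-chain is a poset in which no two distinct elements are comparable. *)

(* Defs.v *)
From Stdlib Require Import List.
From mathcomp Require Import all_boot.
Set Implicit Arguments. Unset Strict Implicit. Unset Printing Implicit Defensive.

Definition digraph (V : Type) := V -> V -> Prop.

Fixpoint chain (V : Type) (Gam : digraph V) (p : list V) : Prop :=
  match p with
  | nil => True
  | x :: r => match r with
              | nil => True
              | y :: _ => Gam x y /\ chain Gam r
              end
  end.

Definition path_from_to (V : Type) (Gam : digraph V) (X Y : V -> Prop)
  (p : list V) : Prop :=
  match p with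
  | nil => False
  | x :: _ => X x /\ Y (List.last p x) /\ List.NoDup p /\ chain Gam p
  end.

Definition preceq (V : Type) (Gam : digraph V) (X Y : V -> Prop) : Prop :=
  exists p : nat -> list V,
    (forall k, path_from_to Gam X Y (p k)) /\
    (forall i j, i <> j -> forall v, List.In v (p i) -> ~ List.In v (p j)).

Definition is_ray (V : Type) (Gam : digraph V) (r : nat -> V) : Prop :=
  (forall i j, r i = r j -> i = j) /\ (forall i, Gam (r i) (r i.+1)).

Definition is_antiray (V : Type) (Gam : digraph V) (r : nat -> V) : Prop :=
  (forall i j, r i = r j -> i = j) /\ (forall i, Gam (r i.+1) (r i)).

Definition RA (V : Type) (Gam : digraph V) :=
  {r : nat -> V | is_ray Gam r \/ is_antiray Gam r}.

Definition verts (V : Type) (Gam : digraph V) (x : RA Gam) : V -> Prop :=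
  fun v => exists k, proj1_sig x k = v.

Definition ra_le (V : Type) (Gam : digraph V) (x y : RA Gam) : Prop :=
  preceq Gam (verts x) (verts y).

Definition ra_eq (V : Type) (Gam : digraph V) (x y : RA Gam) : Prop :=
  ra_le x y /\ ra_le y x.

Definition End (V : Type) (Gam : digraph V) :=
  {E : RA Gam -> Prop | exists x, E = ra_eq x}.

Definition end_le (V : Type) (Gam : digraph V) (E F : End Gam) : Prop :=
  exists x y, proj1_sig E x /\ proj1_sig F y /\ ra_le x y.

Definition ends_antichain (V : Type) (Gam : digraph V) : Prop :=
  forall E F : End Gam, end_le E F -> E = F.

Definition equipotent (A B : Type) : Prop :=
  exists (f : A -> B) (g : B -> A),
    (forall a, g (f a) = a) /\ (forall b, f (g b) = b).

Definition sg_generates (T : Type) (mul : T -> T -> T) (A : list T) : Prop :=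
  forall x, exists a0 l, List.In a0 A /\ List.Forall (fun a => List.In a A) l /\
                         x = List.fold_left mul l a0.

Definition right_cayley (T : Type) (mul : T -> T -> T) (A : list T) : digraph T :=
  fun x y => exists a, List.In a A /\ y = mul x a.

Definition left_cayley (T : Type) (mul : T -> T -> T) (A : list T) : digraph T :=
  fun x y => exists a, List.In a A /\ y = mul a x.

Definition rees (G : Type) (n m : nat) := ('I_n * G * 'I_m)%type.

Definition rees_mul (G : Type) (mul : G -> G -> G) (n m : nat)
  (P : 'I_m -> 'I_n -> G) (x y : rees G n m) : rees G n m :=
  let: (i, g, lam) := x in
  let: (j, h, mu) := y in
  (i, mul (mul g (P lam j)) h, mu).

(* Main.v *)
Require Import Defs.
From Stdlib Require Import List.
From Stdlib Require Import Lia PeanoNat Classical ClassicalEpsilon FunctionalExtensionality PropExtensionality ProofIrrelevance.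
Import ListNotations.


Definition lazy {V : Type} (R : digraph V) : digraph V := fun x y => x = y \/ R x y.
Definition transp {V : Type} (R : digraph V) : digraph V := fun x y => R y x.

Lemma last_cons {V} (a : V) l d : List.last (a :: l) d = List.last l a.
Proof.
  revert a d; induction l as [|b l IH]; intros a d; [reflexivity|].
  change (List.last (b :: l) d = List.last (b :: l) a). rewrite !IH. reflexivity.
Qed.

Lemma last_app {V} (l1 l2 : list V) d : List.last (l1 ++ l2) d = List.last l2 (List.last l1 d).
Proof.
  revert d; induction l1 as [|a l1 IH]; intro d; simpl; auto.
  change (List.last (a :: (l1 ++ l2)) d = List.last l2 (List.last (a :: l1) d)).
  rewrite !last_cons. apply IH.
Qed.

Lemma last_In {V} (l : list V) x : In (List.last l x) (x :: l).
Proof.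
  revert x; induction l as [|a l IH]; intro x; [simpl; auto|].
  rewrite last_cons. right. apply IH.
Qed.

Lemma chain_mono {V} (R R' : digraph V) l : (forall x y, R x y -> R' x y) -> chain R l -> chain R' l.
Proof.
  intros H; induction l as [|a l IH]; simpl; auto.
  destruct l; auto. intros [h1 h2]; split; auto.
Qed.

Lemma chain_cc {V} (R : digraph V) x y l : chain R (x :: y :: l) <-> R x y /\ chain R (y :: l).
Proof. reflexivity. Qed.

Lemma chain_app {V} (R : digraph V) x l1 l2 :
  chain R (x :: l1 ++ l2) <-> chain R (x :: l1) /\ chain R (List.last l1 x :: l2).
Proof.
  revert x; induction l1 as [|a l1 IH]; intro x.
  - simpl. tauto.
  - rewrite last_cons. change (chain R (x :: a :: (l1 ++ l2)) <-> chain R (x :: a :: l1) /\ chain R (List.last l1 a :: l2)).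
    rewrite !chain_cc, IH. tauto.
Qed.

Lemma chain_nth {V} (R : digraph V) l d i : chain R l -> S i < length l -> R (nth i l d) (nth (S i) l d).
Proof.
  revert i; induction l as [|a l IH]; intros i; simpl; [lia|].
  destruct l as [|b l]; simpl; [lia|]. intros [h1 h2] hi.
  destruct i; auto. apply (IH i h2). simpl; lia.
Qed.

Lemma nth_len_last {V} (x : V) L d : nth (length L) (x :: L) d = List.last L x.
Proof.
  revert x; induction L as [|a L IH]; intro x; [reflexivity|].
  rewrite last_cons. simpl. apply IH.
Qed.

Lemma chain_tl {V} (R : digraph V) a l : chain R (a :: l) -> chain R l.
Proof. destruct l; simpl; tauto. Qed.

Lemma chain_suffix {V} (R : digraph V) l1 l2 : chain R (l1 ++ l2) -> chain R l2.
Proof. induction l1; simpl; auto. intro h. apply IHl1. apply (chain_tl R a). exact h. Qed.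

Definition wv {V} (w : V * list V) : list V := fst w :: snd w.
Definition wend {V} (w : V * list V) : V := List.last (snd w) (fst w).
Definition iswalk {V} (R : digraph V) (X Y : V -> Prop) (w : V * list V) :=
  X (fst w) /\ Y (wend w) /\ chain (lazy R) (wv w).
Definition LF {V} (f : nat -> list V) := forall v, exists N, forall k, N <= k -> ~ In v (f k).
Definition pre2 {V} (R : digraph V) (X Y : V -> Prop) :=
  exists W : nat -> V * list V, (forall k, iswalk R X Y (W k)) /\ LF (fun k => wv (W k)).

Lemma LF_list {V} (f : nat -> list V) : LF f -> forall F : list V,
  exists N, forall k, N <= k -> forall v, In v F -> ~ In v (f k).
Proof.
  intros H F; induction F as [|a F IH].
  - exists 0; simpl; tauto.
  - destruct IH as [N1 h1]. destruct (H a) as [N2 h2]. exists (N1 + N2).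
    intros k hk v [<-|hv]. apply h2; lia. apply h1; auto; lia.
Qed.

Lemma walk_to_path {V} (R : digraph V) : forall l x, chain (lazy R) (x :: l) ->
  exists q, chain R (x :: q) /\ NoDup (x :: q) /\ List.last q x = List.last l x /\ incl (x :: q) (x :: l).
Proof.
  induction l as [|a l IH]; intros x H.
  - exists []. repeat split; simpl; auto. constructor; auto; constructor. apply incl_refl.
  - destruct H as [Hxa Hc]. destruct (IH a Hc) as [q [h1 [h2 [h3 h4]]]].
    rewrite last_cons, <- h3.
    destruct Hxa as [<-|Hxa].
    + exists q. repeat split; auto. intros v hv. specialize (h4 v hv). simpl in *; tauto.
    + destruct (classic (In x (a :: q))) as [Hin|Hnin].
      * destruct (in_split _ _ Hin) as [q1 [q2 Hq]].
        exists q2. rewrite Hq in h1, h2.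
        assert (E: List.last (a :: q) a = List.last q2 x).
        { rewrite Hq, last_app, last_cons. reflexivity. }
        rewrite last_cons in E. rewrite E.
        split; [|split; [|split]]; auto.
        -- exact (chain_suffix R q1 (x :: q2) h1).
        -- apply NoDup_app_remove_l in h2. exact h2.
        -- intros v hv. assert (In v (a :: q)) by (rewrite Hq; apply in_or_app; right; exact hv).
           specialize (h4 v H). simpl in *; tauto.
      * exists (a :: q). split; [|split; [|split]].
        -- simpl. split; auto.
        -- constructor; auto.
        -- rewrite last_cons. reflexivity.
        -- intros v hv. destruct hv as [<-|hv]; [left; auto|]. right. apply h4. exact hv.
Qed.

Fixpoint accum {V} (Nf : list V -> nat) (g : nat -> list V) (j : nat) : list V :=
  match j with 0 => [] | S j => accum Nf g j ++ g (Nf (accum Nf g j)) end.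

Lemma accum_mono {V} Nf (g : nat -> list V) i j : i <= j -> incl (accum Nf g i) (accum Nf g j).
Proof.
  induction 1. apply incl_refl. simpl. intros v hv. apply in_or_app. left; auto.
Qed.

Lemma pre2_preceq {V} (R : digraph V) X Y : pre2 R X Y -> preceq R X Y.
Proof.
  intros [W [HW HL]].
  pose proof (LF_list _ HL) as HF.
  set (Nf := fun F => proj1_sig (constructive_indefinite_description _ (HF F))).
  assert (HN: forall F k, Nf F <= k -> forall v, In v F -> ~ In v (wv (W k))).
  { intros F. unfold Nf. destruct (constructive_indefinite_description _ (HF F)); simpl; auto. }
  assert (Hp: forall k, exists q, path_from_to R X Y q /\ incl q (wv (W k))).
  { intro k. destruct (HW k) as [hx [hy hc]]. destruct (W k) as [x l]. unfold wv, wend in *; simpl in *.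
    destruct (walk_to_path R l x hc) as [q [h1 [h2 [h3 h4]]]]. exists (x :: q). split; auto.
    unfold path_from_to. split; [exact hx|split;[|split]]; auto. rewrite last_cons. congruence. }
  set (pf := fun k => proj1_sig (constructive_indefinite_description _ (Hp k))).
  assert (Hpf: forall k, path_from_to R X Y (pf k) /\ incl (pf k) (wv (W k))).
  { intro k; unfold pf; destruct (constructive_indefinite_description _ (Hp k)); auto. }
  set (g := fun k => wv (W k)).
  exists (fun j => pf (Nf (accum Nf g j))). split.
  - intro k. apply Hpf.
  - assert (key: forall i j, i < j -> forall v, In v (pf (Nf (accum Nf g i))) -> ~ In v (pf (Nf (accum Nf g j)))).
    { intros i j hij v h1 h2. apply (proj2 (Hpf _)) in h1. apply (proj2 (Hpf _)) in h2.
      apply (HN (accum Nf g j) (Nf (accum Nf g j)) (le_n _) v); auto.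
      apply (accum_mono Nf g (S i) j); [lia|]. simpl. apply in_or_app. right. exact h1. }
    intros i j hij v h1 h2. destruct (Nat.lt_trichotomy i j) as [h|[h|h]].
    + exact (key i j h v h1 h2).
    + tauto.
    + exact (key j i h v h2 h1).
Qed.

Lemma preceq_pre2 {V} (R : digraph V) X Y : preceq R X Y -> pre2 R X Y.
Proof.
  intros [p [Hp Hd]].
  assert (H0 := Hp 0). destruct (p 0) as [|v0 l0] eqn:E0; [destruct H0|].
  exists (fun k => (hd v0 (p k), tl (p k))). split.
  - intro k. specialize (Hp k). destruct (p k) as [|x l]; [destruct Hp|].
    destruct Hp as [h1 [h2 [h3 h4]]]. unfold iswalk, wend, wv; cbn [fst snd hd tl].
    rewrite last_cons in h2. split; [exact h1|split; [exact h2|]].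
    apply (chain_mono R); auto. intros; right; auto.
  - intro v. destruct (classic (exists j, In v (p j))) as [[j hj]|hn].
    + exists (S j). intros k hk. assert (wv (hd v0 (p k), tl (p k)) = p k).
      { specialize (Hp k). destruct (p k); [destruct Hp|reflexivity]. }
      rewrite H. intro hv. apply (Hd j k ltac:(lia) v hj hv).
    + exists 0. intros k _ hv. apply hn. exists k.
      specialize (Hp k). destruct (p k); [destruct Hp|]. exact hv.
Qed.


Lemma fchoice {A B : Type} (Pr : A -> B -> Prop) : (forall k, exists t, Pr k t) -> exists f, forall k, Pr k (f k).
Proof.
  intro H. exists (fun k => proj1_sig (constructive_indefinite_description _ (H k))).
  intro k. destruct (constructive_indefinite_description _ (H k)). exact p.
Qed.

Fixpoint rwl {V} (x : V) (l : list V) : V * list V :=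
  match l with
  | [] => (x, [])
  | a :: l' => (fst (rwl a l'), snd (rwl a l') ++ [x])
  end.

Lemma rw_fst {V} (x : V) l : fst (rwl x l) = List.last l x.
Proof. revert x; induction l as [|a l IH]; intro x; [reflexivity|]. change (fst (rwl a l) = List.last (a :: l) x). rewrite IH, last_cons. reflexivity. Qed.

Lemma rw_end {V} (x : V) l : wend (rwl x l) = x.
Proof. destruct l; [reflexivity|]. unfold wend. simpl. rewrite last_app. reflexivity. Qed.

Lemma rw_len {V} (x : V) l : length (snd (rwl x l)) = length l.
Proof. revert x; induction l as [|a l IH]; intro x; [reflexivity|]. simpl. rewrite length_app, IH. simpl. lia. Qed.

Lemma rw_in {V} (x : V) l v : In v (wv (rwl x l)) <-> In v (x :: l).
Proof.
  revert x; induction l as [|a l IH]; intro x; [simpl; tauto|].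
  unfold wv in *; simpl. specialize (IH a). simpl in IH. rewrite in_app_iff. simpl. tauto.
Qed.

Lemma rw_chain {V} (Q : digraph V) x l : chain Q (x :: l) -> chain (transp Q) (wv (rwl x l)).
Proof.
  revert x; induction l as [|a l IH]; intros x H; [simpl; auto|].
  apply chain_cc in H. destruct H as [h1 h2]. specialize (IH a h2).
  unfold wv; simpl. apply chain_app. split; [exact IH|].
  change (List.last (snd (rwl a l)) (fst (rwl a l))) with (wend (rwl a l)). rewrite rw_end. simpl. split; auto.
Qed.

Lemma lazy_transp {V} (R : digraph V) x y : lazy (transp R) x y <-> transp (lazy R) x y.
Proof. unfold lazy, transp. split; intros [h|h]; auto. Qed.

Lemma pre2_T {V} (R : digraph V) X Y : pre2 R X Y -> pre2 (transp R) Y X.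
Proof.
  intros [W [HW HL]]. exists (fun k => rwl (fst (W k)) (snd (W k))). split.
  - intro k. destruct (HW k) as [h1 [h2 h3]]. unfold iswalk. split; [|split].
    + rewrite rw_fst. exact h2.
    + rewrite rw_end. exact h1.
    + apply (chain_mono (transp (lazy R))). intros x y h; apply lazy_transp; exact h.
      apply rw_chain. exact h3.
  - intro v. destruct (HL v) as [N hN]. exists N. intros k hk hv. apply (hN k hk).
    apply (proj1 (rw_in _ _ _)) in hv. exact hv.
Qed.

Definition proper {V} (s : nat -> V) := forall v, exists N, forall t, N <= t -> s t <> v.
Definition pw {V} (R : digraph V) (s : nat -> V) := (forall t, lazy R (s t) (s (S t))) /\ proper s.
Definition rng {V} (s : nat -> V) : V -> Prop := fun v => exists t, s t = v.
Definition img {V W} (f : V -> W) (X : V -> Prop) : W -> Prop := fun w => exists u, X u /\ f u = w.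
Definition eqv {V} (R : digraph V) X Y := pre2 R X Y /\ pre2 R Y X.
Definition walky {V} (R : digraph V) (Y : V -> Prop) :=
  exists s, (pw R s \/ pw (transp R) s) /\ forall y, Y y -> rng s y.

Lemma proper_list {V} (s : nat -> V) : proper s -> forall F : list V, exists N, forall t, N <= t -> ~ In (s t) F.
Proof.
  intros H F; induction F as [|a F IH]; [exists 0; simpl; tauto|].
  destruct IH as [N1 h1]. destruct (H a) as [N2 h2]. exists (N1 + N2). intros t ht [hv|hv].
  - apply (h2 t); [lia|auto].
  - apply (h1 t); [lia|auto].
Qed.

Lemma pre2_mono {V} (R : digraph V) (X X' Y Y' : V -> Prop) :
  (forall x, X x -> X' x) -> (forall y, Y y -> Y' y) -> pre2 R X Y -> pre2 R X' Y'.
Proof.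
  intros hx hy [W [HW HL]]. exists W. split; auto. intro k. destruct (HW k) as [h1 [h2 h3]]. split; [auto|split; auto].
Qed.

Lemma pt_walks {V} (R : digraph V) X Y (z : nat -> V) (g : V -> V * list V) : proper z ->
  (forall k, iswalk R X Y (g (z k))) ->
  (forall w, exists F, forall k, In w (wv (g (z k))) -> In (z k) F) -> pre2 R X Y.
Proof.
  intros hz hg hf. exists (fun k => g (z k)). split; auto.
  intro w. destruct (hf w) as [F hF]. destruct (proper_list z hz F) as [N hN].
  exists N. intros k hk hw. apply (hN k hk). apply hF. exact hw.
Qed.

Lemma zero_walks {V} (R : digraph V) X Y (z : nat -> V) : proper z -> (forall k, X (z k)) -> (forall k, Y (z k)) -> pre2 R X Y.
Proof.
  intros hz hx hy. apply (pt_walks R X Y z (fun u => (u, []))); auto.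
  - intro k. unfold iswalk, wend, wv; simpl. repeat split; auto.
  - intro w. exists [w]. intros k [h|[]]. left; auto.
Qed.

Definition seg {V} (s : nat -> V) a d : V * list V := (s a, List.map s (List.seq (S a) d)).

Lemma seg_chain {V} (Q : digraph V) s a d : (forall t, Q (s t) (s (S t))) -> chain Q (wv (seg s a d)).
Proof.
  intro H. revert a; induction d as [|d IH]; intro a; [simpl; auto|].
  unfold wv, seg in *; simpl. split; auto. apply (IH (S a)).
Qed.

Lemma seg_end {V} (s : nat -> V) a d : wend (seg s a d) = s (a + d).
Proof.
  revert a; induction d as [|d IH]; intro a.
  - unfold wend, seg; simpl. f_equal; lia.
  - change (List.last (s (S a) :: List.map s (List.seq (S (S a)) d)) (s a) = s (a + S d)).
    rewrite last_cons. specialize (IH (S a)). unfold wend, seg in IH. cbn [fst snd] in IH.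
    rewrite IH. f_equal; lia.
Qed.

Lemma seg_in {V} (s : nat -> V) a d v : In v (wv (seg s a d)) -> exists t, a <= t /\ s t = v.
Proof.
  unfold wv, seg; simpl. intros [h|h]. exists a; split; auto.
  apply in_map_iff in h. destruct h as [t [h1 h2]]. apply in_seq in h2. exists t; split; auto; lia.
Qed.

Lemma along_walk {V} (R : digraph V) s X Y (a b : nat -> nat) : pw R s ->
  (forall k, a k <= b k) -> (forall N, exists M, forall k, M <= k -> N <= a k) ->
  (forall k, X (s (a k))) -> (forall k, Y (s (b k))) -> pre2 R X Y.
Proof.
  intros [hs hp] hab hinf hx hy. exists (fun k => seg s (a k) (b k - a k)). split.
  - intro k. unfold iswalk. split; [exact (hx k)|split].
    + rewrite seg_end. replace (a k + (b k - a k)) with (b k) by (specialize (hab k); lia). apply hy.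
    + apply seg_chain. exact hs.
  - intro v. destruct (hp v) as [N hN]. destruct (hinf N) as [M hM]. exists M. intros k hk hv.
    apply seg_in in hv. destruct hv as [t [h1 h2]]. apply (hN t); auto. specialize (hM k hk). lia.
Qed.

Lemma in_walk_last {V} (w : V * list V) : In (wend w) (wv w).
Proof. unfold wend, wv. apply last_In. Qed.

Lemma trans_fwd {V} (R : digraph V) X Y Z s : pw R s -> (forall y, Y y -> rng s y) ->
  pre2 R X Y -> pre2 R Y Z -> pre2 R X Z.
Proof.
  intros [hs hp] hY [P [HP LP]] [Q [HQ LQ]].
  destruct (fchoice (fun k t => s t = wend (P k))) as [a ha].
  { intro k. destruct (HP k) as [_ [h _]]. apply hY in h. destruct h as [t ht]. exists t; auto. }
  destruct (fchoice (fun k t => s t = fst (Q k))) as [b hb].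
  { intro k. destruct (HQ k) as [h _]. apply hY in h. destruct h as [t ht]. exists t; auto. }
  assert (ainf: forall N, exists M, forall k, M <= k -> N <= a k).
  { intro N. destruct (LF_list _ LP (List.map s (List.seq 0 N))) as [M hM]. exists M. intros k hk.
    destruct (Compare_dec.le_lt_dec N (a k)) as [h|h]; auto. exfalso. apply (hM k hk (s (a k))).
    - apply in_map. apply in_seq. lia.
    - rewrite ha. apply in_walk_last. }
  assert (binf: forall N, exists M, forall k, M <= k -> N <= b k).
  { intro N. destruct (LF_list _ LQ (List.map s (List.seq 0 N))) as [M hM]. exists M. intros k hk.
    destruct (Compare_dec.le_lt_dec N (b k)) as [h|h]; auto. exfalso. apply (hM k hk (s (b k))).
    - apply in_map. apply in_seq. lia.
    - rewrite hb. left. reflexivity. }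
  destruct (fchoice (fun k l => k <= l /\ a k <= b l)) as [lk hlk].
  { intro k. destruct (binf (a k)) as [M hM]. exists (Nat.max M k). split; [lia|]. apply hM. lia. }
  exists (fun k => (fst (P k), snd (P k) ++ snd (seg s (a k) (b (lk k) - a k)) ++ snd (Q (lk k)))).
  split.
  - intro k. destruct (HP k) as [h1 [h2 h3]]. destruct (HQ (lk k)) as [g1 [g2 g3]].
    assert (E1: wend (P k) = s (a k)) by auto.
    assert (E2: wend (seg s (a k) (b (lk k) - a k)) = fst (Q (lk k))).
    { rewrite seg_end, <- hb. f_equal. specialize (hlk k). lia. }
    unfold iswalk. split; [exact h1|split].
    + unfold wend. simpl. rewrite !last_app. unfold wend in E1, E2. rewrite E1. simpl in E2. rewrite E2. exact g2.
    + unfold wv; simpl. apply chain_app. split; [exact h3|]. unfold wend in E1. rewrite E1.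
      apply chain_app. split. apply (seg_chain _ s (a k)). intro t; apply hs.
      unfold wend in E2. simpl in E2. rewrite E2. exact g3.
  - intro v. destruct (LP v) as [N1 h1]. destruct (LQ v) as [N2 h2]. destruct (hp v) as [N3 h3].
    destruct (ainf N3) as [M hM]. exists (N1 + N2 + M). intros k hk hv.
    unfold wv in hv; simpl in hv. destruct hv as [hv|hv].
    + apply (h1 k ltac:(lia)). left; auto.
    + apply in_app_iff in hv. destruct hv as [hv|hv]; [apply (h1 k ltac:(lia)); right; auto|].
      apply in_app_iff in hv. destruct hv as [hv|hv].
      * assert (In v (wv (seg s (a k) (b (lk k) - a k)))) by (right; exact hv).
        apply seg_in in H. destruct H as [t [ht1 ht2]]. apply (h3 t); auto. specialize (hM k ltac:(lia)). lia.
      * apply (h2 (lk k)). specialize (hlk k). lia. right; auto.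
Qed.

Lemma trans {V} (R : digraph V) X Y Z : walky R Y -> pre2 R X Y -> pre2 R Y Z -> pre2 R X Z.
Proof.
  intros [s [[hs|hs] hY]] h1 h2.
  - exact (trans_fwd R X Y Z s hs hY h1 h2).
  - apply pre2_T in h1. apply pre2_T in h2. exact (pre2_T _ _ _ (trans_fwd (transp R) Z Y X s hs hY h2 h1)).
Qed.

Lemma eqv_trans {V} (R : digraph V) X Y Z : walky R Y -> eqv R X Y -> eqv R Y Z -> eqv R X Z.
Proof. intros hw [a b] [c d]. split; eapply trans; eauto. Qed.

Lemma eqv_sym {V} (R : digraph V) X Y : eqv R X Y -> eqv R Y X.
Proof. intros [a b]; split; auto. Qed.

Lemma eqv_T {V} (R : digraph V) X Y : eqv (transp R) X Y -> eqv R X Y.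
Proof. intros [a b]; split; apply pre2_T in a; apply pre2_T in b; auto. Qed.

Lemma walky_mono {V} (R : digraph V) (X Y : V -> Prop) : (forall x, X x -> Y x) -> walky R Y -> walky R X.
Proof. intros h [s [hs hy]]. exists s; split; auto. Qed.

Lemma walky_T {V} (R : digraph V) Y : walky (transp R) Y -> walky R Y.
Proof. intros [s [[h|h] hy]]; exists s; split; auto. Qed.


Lemma exists_max (Pr : nat -> Prop) N : (forall t, Pr t -> t < N) -> (exists t, Pr t) ->
  exists t, Pr t /\ forall t', Pr t' -> t' <= t.
Proof.
  revert Pr; induction N as [|N IH]; intros Pr hb he.
  - destruct he as [t ht]. specialize (hb t ht). lia.
  - destruct (classic (Pr N)) as [h|h].
    + exists N. split; auto. intros t' ht'. specialize (hb t' ht'). lia.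
    + apply IH; auto. intros t ht. specialize (hb t ht). destruct (Nat.eq_dec t N); subst; [tauto|lia].
Qed.

Fixpoint iterT (f : nat -> nat) (t0 : nat) (j : nat) : nat :=
  match j with 0 => t0 | S j => f (iterT f t0 j) end.

Lemma extract {V} (R : digraph V) s : pw R s ->
  exists r, is_ray R r /\ eqv R (rng r) (rng s) /\ (forall y, rng r y -> rng s y).
Proof.
  intros [hs hp].
  assert (HL: forall t, exists L, s L = s t /\ forall t', s t' = s t -> t' <= L).
  { intro t. destruct (hp (s t)) as [N hN]. apply exists_max with N.
    - intros t' h. destruct (Compare_dec.le_lt_dec N t'); auto. exfalso; apply (hN t'); auto.
    - exists t; auto. }
  destruct (fchoice _ HL) as [Lf hL].
  set (T := iterT (fun t => Lf (S t)) (Lf 0)).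
  assert (HT: forall j, T (S j) = Lf (S (T j))) by reflexivity.
  assert (HM: forall j t', s t' = s (T j) -> t' <= T j).
  { intros [|j] t' h.
    - change (T 0) with (Lf 0) in *. destruct (hL 0) as [e hm]. apply hm. congruence.
    - rewrite HT in *. destruct (hL (S (T j))) as [e hm]. apply hm. congruence. }
  assert (HS: forall j, s (T (S j)) = s (S (T j))).
  { intro j. rewrite HT. apply hL. }
  assert (Hinc: forall j, T j < T (S j)).
  { intro j. apply (HM (S j)). rewrite HS. reflexivity. }
  assert (Hmono: forall i j, i < j -> T i < T j).
  { intros i j h. induction h. apply Hinc. specialize (Hinc m). lia. }
  assert (Hge: forall j, j <= T j).
  { induction j; [lia|]. specialize (Hinc j). lia. }
  assert (Hray: is_ray R (fun j => s (T j))).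
  { split.
    - intros i j h. destruct (Nat.lt_trichotomy i j) as [hij|[hij|hij]]; auto; exfalso.
      + assert (T j <= T i) by (apply HM; auto). specialize (Hmono i j hij). lia.
      + assert (T i <= T j) by (apply HM; auto). specialize (Hmono j i hij). lia.
    - intro j. rewrite HS. destruct (hs (T j)) as [h|h]; auto. exfalso.
      assert (S (T j) <= T j) by (apply HM; auto). lia. }
  exists (fun j => s (T j)). split; [exact Hray|split].
  - split.
    + apply (zero_walks R _ _ (fun j => s (T j))).
      * intro v. destruct (classic (exists k, s (T k) = v)) as [[k hk]|hn].
        -- exists (S k). intros t ht e. assert (t = k) by (apply (proj1 Hray); congruence). lia.
        -- exists 0. intros t _ e. apply hn. exists t; auto.
      * intro k. exists k; reflexivity.
      * intro k. exists (T k); reflexivity.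
    + apply (along_walk R s _ _ (fun k => k) T (conj hs hp) Hge).
      * intro N. exists N. auto.
      * intro k. exists k; reflexivity.
      * intro k. exists k; reflexivity.
  - intros y [k hk]. exists (T k); auto.
Qed.

Lemma inj_proper {V} (r : nat -> V) : (forall i j, r i = r j -> i = j) -> proper r.
Proof.
  intros hi v. destruct (classic (exists k, r k = v)) as [[k hk]|hn].
  - exists (S k). intros t ht e. assert (t = k) by (apply hi; congruence). lia.
  - exists 0. intros t _ e. apply hn. exists t; auto.
Qed.

Lemma RA_proper {V} (R : digraph V) (x : RA R) : proper (proj1_sig x).
Proof. destruct x as [r hr]; simpl; destruct hr as [[h _]|[h _]]; apply inj_proper; auto. Qed.

Lemma RA_pw {V} (R : digraph V) (x : RA R) : pw R (proj1_sig x) \/ pw (transp R) (proj1_sig x).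
Proof.
  pose proof (RA_proper R x) as hp. destruct x as [r hr]; simpl in *; destruct hr as [[_ h]|[_ h]].
  - left; split; [intro t; right; apply h|exact hp].
  - right; split; [intro t; right; apply h|exact hp].
Qed.

Lemma verts_rng {V} (R : digraph V) (x : RA R) : verts x = rng (proj1_sig x).
Proof. reflexivity. Qed.

Lemma RA_walky {V} (R : digraph V) (x : RA R) : walky R (verts x).
Proof. exists (proj1_sig x). split; [apply RA_pw|]. intros y h; exact h. Qed.

Lemma ra_eq_eqv {V} (R : digraph V) (x y : RA R) : ra_eq x y <-> eqv R (verts x) (verts y).
Proof.
  unfold ra_eq, ra_le, eqv. split; intros [a b]; split;
  try (apply preceq_pre2; assumption); apply pre2_preceq; assumption.
Qed.

Lemma ra_eq_refl {V} (R : digraph V) (x : RA R) : ra_eq x x.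
Proof.
  apply ra_eq_eqv. assert (pre2 R (verts x) (verts x)).
  { apply (zero_walks R _ _ (proj1_sig x)); [apply RA_proper| |]; intro k; exists k; reflexivity. }
  split; auto.
Qed.

Lemma ra_eq_sym {V} (R : digraph V) (x y : RA R) : ra_eq x y -> ra_eq y x.
Proof. unfold ra_eq; tauto. Qed.

Lemma ra_eq_trans {V} (R : digraph V) (x y z : RA R) : ra_eq x y -> ra_eq y z -> ra_eq x z.
Proof.
  rewrite !ra_eq_eqv. intros h1 h2. apply (eqv_trans R _ (verts y)); auto. apply RA_walky.
Qed.

Lemma ra_eq_class {V} (R : digraph V) (x y : RA R) : ra_eq x y -> ra_eq x = ra_eq y.
Proof.
  intro h. apply functional_extensionality. intro z. apply propositional_extensionality.
  split; intro h'. apply (ra_eq_trans R y x z); auto. apply ra_eq_sym; auto.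
  apply (ra_eq_trans R x y z); auto.
Qed.

Definition cls {V} (R : digraph V) (x : RA R) : End R := exist _ (ra_eq x) (ex_intro _ x eq_refl).

Lemma End_eq {V} (R : digraph V) (E F : End R) : proj1_sig E = proj1_sig F -> E = F.
Proof. destruct E, F; simpl. intro h. apply subset_eq_compat. exact h. Qed.

Lemma cls_eq {V} (R : digraph V) (x y : RA R) : ra_eq x y -> cls R x = cls R y.
Proof. intro h. apply End_eq. simpl. apply ra_eq_class. exact h. Qed.

Lemma extract_RA {V} (R : digraph V) s : pw R s \/ pw (transp R) s ->
  exists r : RA R, eqv R (verts r) (rng s) /\ (forall y, verts r y -> rng s y).
Proof.
  intros [h|h].
  - destruct (extract R s h) as [r [h1 [h2 h3]]]. exists (exist _ r (or_introl h1)). simpl. auto.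
  - destruct (extract (transp R) s h) as [r [h1 [h2 h3]]]. exists (exist _ r (or_intror h1)). simpl.
    split; auto. apply eqv_T; exact h2.
Qed.


Definition tr0 {V W} (R : digraph V) (D : digraph W) (f : V -> W) (fw : V -> V -> list W) :=
  (forall u v, R u v -> chain (lazy D) (f u :: fw u v) /\ List.last (fw u v) (f u) = f v) /\
  (forall w, exists F, forall u v, R u v -> In w (fw u v) -> In u F /\ In v F) /\
  (forall w, exists F, forall u, f u = w -> In u F).
Definition lenK {V W} (R : digraph V) (fw : V -> V -> list W) K := forall u v, R u v -> length (fw u v) = K.
Definition outfin {V} (R : digraph V) := forall v, exists N, forall u, R v u -> In u N.

Definition fwL {V W} (f : V -> W) (fw : V -> V -> list W) K (u v : V) : list W :=
  if excluded_middle_informative (u = v) then List.repeat (f u) K else fw u v.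

Lemma chain_repeat {W} (D : digraph W) (x : W) K : chain (lazy D) (x :: List.repeat x K).
Proof. induction K; simpl; auto. destruct K; simpl in *; split; auto; left; auto. Qed.

Lemma last_repeat {W} (x : W) K : List.last (List.repeat x K) x = x.
Proof. induction K; auto. change (List.last (x :: List.repeat x K) x = x). rewrite last_cons. auto. Qed.

Lemma fwL_spec {V W} (R : digraph V) (D : digraph W) f fw K u v : tr0 R D f fw -> lazy R u v ->
  chain (lazy D) (f u :: fwL f fw K u v) /\ List.last (fwL f fw K u v) (f u) = f v.
Proof.
  intros [h1 _] huv. unfold fwL. destruct (excluded_middle_informative (u = v)) as [e|ne].
  - subst. split; [apply chain_repeat|apply last_repeat].
  - destruct huv as [e|huv]; [tauto|]. apply h1; auto.
Qed.

Lemma fwL_len {V W} (R : digraph V) (fw : V -> V -> list W) f K u v : lenK R fw K -> lazy R u v ->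
  length (fwL f fw K u v) = K.
Proof.
  intros h huv. unfold fwL. destruct (excluded_middle_informative (u = v)) as [e|ne].
  - apply repeat_length.
  - destruct huv as [e|huv]; [tauto|]. apply h; auto.
Qed.

Lemma fwL_in {V W} (R : digraph V) (f : V -> W) fw K u v w : lazy R u v -> In w (fwL f fw K u v) ->
  f u = w \/ (R u v /\ In w (fw u v)).
Proof.
  intros huv. unfold fwL. destruct (excluded_middle_informative (u = v)) as [e|ne].
  - intro h. apply repeat_spec in h. left; auto.
  - destruct huv as [e|huv]; [tauto|]. right; auto.
Qed.

Lemma fin_all {V W} (R : digraph V) (D : digraph W) f fw : tr0 R D f fw ->
  forall w, exists F, forall u v, lazy R u v -> In w (f u :: fwL f fw 0 u v) -> In u F.
Proof.
  intros [h1 [h2 h3]] w. destruct (h2 w) as [F1 hF1]. destruct (h3 w) as [F2 hF2]. exists (F1 ++ F2).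
  intros u v huv [e|hin]; apply in_or_app.
  - right; apply hF2; auto.
  - apply fwL_in with (R := R) in hin; auto. destruct hin as [e|[r hin]].
    + right; apply hF2; auto.
    + left; apply (hF1 u v r hin).
Qed.

Fixpoint mw {V W} (f : V -> W) fw (x : V) (l : list V) : W * list W :=
  match l with
  | [] => (f x, [])
  | a :: l' => (f x, fwL f fw 0 x a ++ snd (mw f fw a l'))
  end.

Lemma mw_fst {V W} (f : V -> W) fw x l : fst (mw f fw x l) = f x.
Proof. destruct l; reflexivity. Qed.

Lemma mw_walk {V W} (R : digraph V) (D : digraph W) f fw : tr0 R D f fw -> forall l x,
  chain (lazy R) (x :: l) -> chain (lazy D) (wv (mw f fw x l)) /\ wend (mw f fw x l) = f (List.last l x).
Proof.
  intros htr. induction l as [|a l IH]; intros x hc; [simpl; auto|].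
  apply chain_cc in hc. destruct hc as [hxa hc]. destruct (IH a hc) as [c1 e1].
  destruct (fwL_spec R D f fw 0 x a htr hxa) as [c2 e2].
  unfold wv, wend in *. cbn [mw fst snd]. rewrite mw_fst in c1, e1. split.
  - apply chain_app. split; auto. rewrite e2. exact c1.
  - rewrite last_app, e2, e1, last_cons. reflexivity.
Qed.

Lemma mw_in {V W} (R : digraph V) (f : V -> W) fw w : forall l x,
  chain (lazy R) (x :: l) -> In w (wv (mw f fw x l)) ->
  exists u v, In u (x :: l) /\ lazy R u v /\ In w (f u :: fwL f fw 0 u v).
Proof.
  induction l as [|a l IH]; intros x hc hin.
  - exists x, x. split; [left; auto|split; [left; auto|]]. destruct hin as [e|[]]. left; auto.
  - apply chain_cc in hc. destruct hc as [hxa hc]. unfold wv in hin. cbn [mw fst snd] in hin.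
    destruct hin as [e|hin].
    + exists x, a. split; [left; auto|split; auto]. left; auto.
    + apply in_app_iff in hin. destruct hin as [hin|hin].
      * exists x, a. split; [left; auto|split; auto]. right; auto.
      * destruct (IH a hc) as [u [v [h1 h2]]]. unfold wv. rewrite mw_fst. right. exact hin.
        exists u, v. split; [right; auto|auto].
Qed.

Lemma map_pre2 {V W} (R : digraph V) (D : digraph W) f fw X Y : tr0 R D f fw ->
  pre2 R X Y -> pre2 D (img f X) (img f Y).
Proof.
  intros htr [P [HP LP]].
  exists (fun k => mw f fw (fst (P k)) (snd (P k))). split.
  - intro k. destruct (HP k) as [h1 [h2 h3]]. destruct (mw_walk R D f fw htr _ _ h3) as [c e].
    unfold iswalk. rewrite mw_fst. split; [exists (fst (P k)); auto|split; [|exact c]].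
    rewrite e. exists (wend (P k)); auto.
  - intro w. destruct (fin_all R D f fw htr w) as [F hF].
    destruct (LF_list _ LP F) as [N hN]. exists N. intros k hk hw.
    destruct (HP k) as [_ [_ h3]].
    destruct (mw_in R f fw w _ _ h3 hw) as [u [v [hu [huv hin]]]].
    exact (hN k hk u (hF u v huv hin) hu).
Qed.

Lemma map_eqv {V W} (R : digraph V) (D : digraph W) f fw X Y : tr0 R D f fw ->
  eqv R X Y -> eqv D (img f X) (img f Y).
Proof. intros h [a b]; split; eapply map_pre2; eauto. Qed.

Lemma outfin_list {V} (R : digraph V) : outfin R -> forall F, exists N, forall v u, In v F -> R v u -> In u N.
Proof.
  intros h F. induction F as [|a F IH]; [exists []; simpl; tauto|].
  destruct IH as [N1 h1]. destruct (h a) as [N2 h2]. exists (N1 ++ N2).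
  intros v u [e|hv] r; apply in_or_app; [subst; right; auto|left; eauto].
Qed.

Lemma transfer_T {V W} (R : digraph V) (D : digraph W) f fw K : tr0 R D f fw -> lenK R fw K -> outfin R ->
  exists fw', tr0 (transp R) (transp D) f fw' /\ lenK (transp R) fw' K.
Proof.
  intros [h1 [h2 h3]] hl ho.
  exists (fun u v => snd (rwl (f v) (fw v u))). split; [split; [|split]|].
  - intros u v r. unfold transp in r. destruct (h1 v u r) as [c e].
    pose proof (rw_chain _ _ _ c) as c'.
    assert (E1: fst (rwl (f v) (fw v u)) = f u) by (rewrite rw_fst; exact e).
    pose proof (rw_end (f v) (fw v u)) as E2. unfold wend in E2. rewrite E1 in E2.
    unfold wv in c'. rewrite E1 in c'. split; [|exact E2].
    apply (chain_mono (transp (lazy D))); auto. intros x y hh; apply lazy_transp; exact hh.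
  - intro w. destruct (h2 w) as [F1 hF1]. destruct (h3 w) as [F2 hF2].
    destruct (outfin_list R ho F2) as [N hN]. exists (F1 ++ F2 ++ N).
    intros u v r hin. unfold transp in r.
    assert (hin': In w (wv (rwl (f v) (fw v u)))) by (right; exact hin).
    apply (proj1 (rw_in _ _ _)) in hin'. destruct hin' as [e|hin'].
    + assert (In v F2) by (apply hF2; auto). split; apply in_or_app; right; apply in_or_app; [right|left]; eauto.
    + destruct (hF1 v u r hin') as [a b]. split; apply in_or_app; left; auto.
  - exact h3.
  - intros u v r. rewrite rw_len. apply hl. exact r.
Qed.

Lemma divmod_step K t : K <> 0 ->
  (S t mod K = 0 /\ S t / K = S (t / K) /\ S (t mod K) = K) \/
  (S t mod K = S (t mod K) /\ S t / K = t / K).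
Proof.
  intro hK. pose proof (Nat.div_mod t K hK) as E. pose proof (Nat.mod_upper_bound t K hK) as B.
  destruct (Nat.eq_dec (S (t mod K)) K) as [e|ne].
  - left. assert (S t = K * S (t / K) + 0) by lia.
    split; [symmetry; apply (Nat.mod_unique (S t) K (S (t/K)) 0); lia|split; auto].
    symmetry; apply (Nat.div_unique (S t) K (S (t/K)) 0); lia.
  - right. assert (S t = K * (t / K) + S (t mod K)) by lia.
    split; [symmetry; apply (Nat.mod_unique (S t) K (t/K) (S (t mod K))); lia|].
    symmetry; apply (Nat.div_unique (S t) K (t/K) (S (t mod K))); lia.
Qed.

Lemma map_pw {V W} (R : digraph V) (D : digraph W) f fw K s : tr0 R D f fw -> lenK R fw K -> 1 <= K ->
  pw R s -> exists s', pw D s' /\ (forall t, s' (t * K) = f (s t)) /\ eqv D (rng s') (img f (rng s)) /\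
  (forall tau, exists u l, chain (lazy D) (f u :: l) /\ rng s u /\ In (s' tau) (f u :: l)).
Proof.
  intros htr hl hK [hs hp].
  assert (hK0: K <> 0) by lia.
  set (piece := fun t => f (s t) :: fwL f fw K (s t) (s (S t))).
  assert (Hpc: forall t, chain (lazy D) (piece t) /\ List.last (fwL f fw K (s t) (s (S t))) (f (s t)) = f (s (S t))
     /\ length (piece t) = S K).
  { intro t. destruct (fwL_spec R D f fw K _ _ htr (hs t)) as [a b]. split; [exact a|split; [exact b|]].
    unfold piece. simpl. rewrite (fwL_len R fw f K _ _ hl (hs t)). reflexivity. }
  set (s' := fun tau => nth (tau mod K) (piece (tau / K)) (f (s 0))).
  assert (H0: forall t, s' (t * K) = f (s t)).
  { intro t. unfold s'. rewrite Nat.Div0.mod_mul, Nat.div_mul; auto. }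
  assert (Hin: forall tau, In (s' tau) (piece (tau / K))).
  { intro tau. unfold s'. apply nth_In. destruct (Hpc (tau / K)) as [_ [_ e]]. rewrite e.
    pose proof (Nat.mod_upper_bound tau K hK0). lia. }
  assert (Hstep: forall tau, lazy D (s' tau) (s' (S tau))).
  { intro tau. destruct (Hpc (tau / K)) as [c [e l]]. unfold s'.
    destruct (divmod_step K tau hK0) as [[m1 [d1 m2]]|[m1 d1]]; rewrite m1, d1.
    - replace (nth 0 (piece (S (tau / K))) (f (s 0))) with (nth K (piece (tau / K)) (f (s 0))).
      + assert (HH := chain_nth (lazy D) (piece (tau/K)) (f (s 0)) (tau mod K) c ltac:(rewrite l; lia)).
        rewrite m2 in HH. exact HH.
      + unfold piece at 1. rewrite <- (fwL_len R fw f K _ _ hl (hs (tau / K))) at 1.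
        rewrite nth_len_last. rewrite e. reflexivity.
    - apply chain_nth; auto. rewrite l. rewrite <- m1. pose proof (Nat.mod_upper_bound (S tau) K hK0). lia. }
  assert (Hprop: proper s').
  { intro w. destruct (fin_all R D f fw htr w) as [F1 hF1]. destruct htr as [_ [h2 h3]].
    destruct (h2 w) as [F2 hF2]. destruct (h3 w) as [F3 hF3].
    destruct (proper_list s hp (F2 ++ F3)) as [N hN].
    exists (N * K). intros tau htau e. assert (N <= tau / K) by (apply Nat.div_le_lower_bound; lia).
    apply (hN (tau / K) H). specialize (Hin tau). rewrite e in Hin. unfold piece in Hin.
    destruct Hin as [e'|Hin]; apply in_or_app; [right; apply hF3; auto|].
    apply fwL_in with (R := R) in Hin; [|apply hs]. destruct Hin as [e'|[r Hin]].
    + right; apply hF3; auto.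
    + left. exact (proj1 (hF2 _ _ r Hin)). }
  exists s'. split; [split; auto|split; [exact H0|split]].
  - split.
    + apply (along_walk D s' _ _ (fun tau => tau) (fun tau => S (tau / K) * K) (conj Hstep Hprop)).
      * intro tau. pose proof (Nat.div_mod tau K hK0). pose proof (Nat.mod_upper_bound tau K hK0). nia.
      * intro N. exists N; auto.
      * intro k. exists k; reflexivity.
      * intro k. rewrite H0. exists (s (S (k / K))). split; auto. exists (S (k / K)); auto.
    + apply (zero_walks D _ _ (fun t => s' (t * K))).
      * intro w. destruct (Hprop w) as [N hN]. exists N. intros t ht. apply hN. nia.
      * intro t. rewrite H0. exists (s t). split; auto. exists t; auto.
      * intro t. exists (t * K); auto.
  - intro tau. exists (s (tau / K)), (fwL f fw K (s (tau / K)) (s (S (tau / K)))).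
    split; [apply Hpc|split; [exists (tau / K); auto|apply Hin]].
Qed.


Lemma walky_img {V W} (R : digraph V) (D : digraph W) f fw K Y : tr0 R D f fw -> lenK R fw K -> 1 <= K ->
  outfin R -> walky R Y -> walky D (img f Y).
Proof.
  intros htr hl hK ho [s [[hs|hs] hY]].
  - destruct (map_pw R D f fw K s htr hl hK hs) as [s' [hs' [h0 _]]].
    exists s'. split; [left; auto|]. intros y [u [hu e]]. apply hY in hu. destruct hu as [t ht].
    exists (t * K). rewrite h0. congruence.
  - destruct (transfer_T R D f fw K htr hl ho) as [fw' [htr' hl']].
    destruct (map_pw (transp R) (transp D) f fw' K s htr' hl' hK hs) as [s' [hs' [h0 _]]].
    exists s'. split; [right; auto|]. intros y [u [hu e]]. apply hY in hu. destruct hu as [t ht].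
    exists (t * K). rewrite h0. congruence.
Qed.

Lemma rep_map {V W} (R : digraph V) (D : digraph W) f fw K : tr0 R D f fw -> lenK R fw K -> 1 <= K ->
  outfin R -> forall x : RA R, exists r : RA D, eqv D (verts r) (img f (verts x)) /\
  (forall y, verts r y -> exists u l, (chain (lazy D) (f u :: l) \/ chain (lazy (transp D)) (f u :: l)) /\
      verts x u /\ In y (f u :: l)).
Proof.
  intros htr hl hK ho x. destruct (RA_pw R x) as [h|h].
  - destruct (map_pw R D f fw K _ htr hl hK h) as [s' [hs' [h0 [heq htk]]]].
    destruct (extract_RA D s' (or_introl hs')) as [r [e1 e2]]. exists r. split.
    + apply (eqv_trans D _ (rng s')); auto. exists s'. split; [left; auto|]. auto.
    + intros y hy. apply e2 in hy. destruct hy as [tau <-]. destruct (htk tau) as [u [l [a [b c]]]].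
      exists u, l. split; [left; auto|split; auto].
  - destruct (transfer_T R D f fw K htr hl ho) as [fw' [htr' hl']].
    destruct (map_pw (transp R) (transp D) f fw' K _ htr' hl' hK h) as [s' [hs' [h0 [heq htk]]]].
    destruct (extract_RA D s' (or_intror hs')) as [r [e1 e2]]. exists r. split.
    + apply (eqv_trans D _ (rng s')); auto. exists s'. split; [right; auto|]. auto. apply eqv_T; auto.
    + intros y hy. apply e2 in hy. destruct hy as [tau <-]. destruct (htk tau) as [u [l [a [b c]]]].
      exists u, l. split; [right; auto|split; auto].
Qed.

Definition revdata {V} (R : digraph V) (rv : V -> V -> list V) :=
  (forall u v, R u v -> chain (lazy R) (v :: rv u v) /\ List.last (rv u v) v = u) /\
  (forall w, exists F, forall u v, R u v -> In w (v :: rv u v) -> In u F /\ In v F).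

Lemma rev_sym {V} (R : digraph V) rv X Y : revdata R rv -> pre2 R X Y -> pre2 R Y X.
Proof.
  intros [h1 h2] hp.
  assert (htr: tr0 R (transp R) (fun u => u) (fun u v => snd (rwl v (rv u v)))).
  { split; [|split].
    - intros u v r. destruct (h1 u v r) as [c e].
      pose proof (rw_chain _ _ _ c) as c'.
      assert (E1: fst (rwl v (rv u v)) = u) by (rewrite rw_fst; exact e).
      pose proof (rw_end v (rv u v)) as E2. unfold wend in E2. rewrite E1 in E2.
      unfold wv in c'. rewrite E1 in c'. split; [|exact E2].
      apply (chain_mono (transp (lazy R))); auto. intros x y hh; apply lazy_transp; exact hh.
    - intro w. destruct (h2 w) as [F hF]. exists F. intros u v r hin. apply hF; auto.
      apply (proj1 (rw_in v (rv u v) w)). right; exact hin.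
    - intro w. exists [w]. intros u e. left; auto. }
  pose proof (map_pre2 _ _ _ _ _ _ htr hp) as hq.
  apply (pre2_mono _ _ X _ Y) in hq.
  - exact (pre2_T _ _ _ hq).
  - intros x [u [hu e]]; subst; auto.
  - intros x [u [hu e]]; subst; auto.
Qed.

Lemma chain_c {V I} (R : digraph V) (c : V -> I) : (forall u v, R u v -> c u = c v) ->
  forall l x, chain (lazy R) (x :: l) \/ chain (lazy (transp R)) (x :: l) -> forall y, In y (x :: l) -> c y = c x.
Proof.
  intros hc. induction l as [|a l IH]; intros x h y hy.
  - destruct hy as [<-|[]]; auto.
  - assert (E: c a = c x /\ (chain (lazy R) (a :: l) \/ chain (lazy (transp R)) (a :: l))).
    { destruct h as [h|h]; apply chain_cc in h; destruct h as [[e|r] h]; subst; split; auto;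
      unfold transp in *; try (symmetry; apply hc; auto); apply hc; auto. }
    destruct E as [E h']. destruct hy as [<-|hy]; auto. rewrite <- E. apply IH; auto.
Qed.

Lemma RA_comp {V I} (R : digraph V) (c : V -> I) : (forall u v, R u v -> c u = c v) ->
  forall (x : RA R) k, c (proj1_sig x k) = c (proj1_sig x 0).
Proof.
  intros hc [r hr] k; simpl. induction k; auto. rewrite <- IHk.
  destruct hr as [[_ h]|[_ h]]; [symmetry|]; apply hc; apply h.
Qed.

Lemma comp_pre2 {V I} (R : digraph V) (c : V -> I) X Y i : (forall u v, R u v -> c u = c v) ->
  (forall x, X x -> c x = i) -> pre2 R X Y -> exists y, Y y /\ c y = i.
Proof.
  intros hc hX [W [HW _]]. destruct (HW 0) as [h1 [h2 h3]]. exists (wend (W 0)). split; auto.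
  rewrite <- (hX _ h1). apply (chain_c R c hc (snd (W 0)) (fst (W 0))); [left; exact h3|].
  apply in_walk_last.
Qed.

Theorem abstract_ends {V W I : Type} (R : digraph V) (D : digraph W) (c : V -> I) (phi : V -> W)
  (psi : I -> W -> V) (fw : V -> V -> list W) (K : nat) (bw : I -> W -> W -> list V) (K' : nat)
  (g1 g2 : V -> list V) (rv : V -> V -> list V) :
  tr0 R D phi fw -> lenK R fw K -> 1 <= K ->
  (forall i, tr0 D R (psi i) (bw i) /\ lenK D (bw i) K') -> 1 <= K' ->
  outfin R -> outfin D ->
  (forall u v, R u v -> c u = c v) -> (forall i w, c (psi i w) = i) ->
  (forall i w, phi (psi i w) = w) ->
  (forall u, chain (lazy R) (u :: g1 u) /\ List.last (g1 u) u = psi (c u) (phi u) /\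
             chain (lazy R) (psi (c u) (phi u) :: g2 u) /\ List.last (g2 u) (psi (c u) (phi u)) = u) ->
  (forall w, exists F, forall u, In w (g1 u) \/ In w (g2 u) -> In u F) ->
  revdata R rv ->
  ends_antichain R /\ equipotent (End R) (I * End D).
Proof.
  intros htr hl hK hbw hK' hoR hoD hc hcpsi hpp hg hgf hrv.
  split.
  { intros E F [x [y [hx [hy hle]]]]. apply End_eq.
    destruct E as [PE [x0 e0]], F as [PF [y0 f0]]. simpl in *. subst.
    assert (hle': ra_le y x).
    { unfold ra_le in *. apply pre2_preceq. apply (rev_sym R rv); auto. apply preceq_pre2; auto. }
    assert (ra_eq x y) by (split; auto).
    apply ra_eq_class. apply (ra_eq_trans R x0 x y0); auto. apply (ra_eq_trans R x y y0); auto.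
    apply ra_eq_sym; auto. }
  assert (hclose: forall (x : RA R) i, (forall k, c (proj1_sig x k) = i) ->
     eqv R (verts x) (img (psi i) (img phi (verts x)))).
  { intros x i hci. destruct htr as [_ [_ hfib]]. split.
    - apply (pt_walks R _ _ (proj1_sig x) (fun u => (u, g1 u))); [apply RA_proper| |].
      + intro k. unfold iswalk, wend, wv; simpl. destruct (hg (proj1_sig x k)) as [a [b _]].
        split; [exists k; auto|split; auto]. rewrite b, hci. exists (phi (proj1_sig x k)).
        split; auto. exists (proj1_sig x k). split; auto. exists k; auto.
      + intro w. destruct (hgf w) as [F hF]. exists (w :: F). intros k [e|hin]; [left; auto|].
        right. apply hF. left; auto.
    - apply (pt_walks R _ _ (proj1_sig x) (fun u => (psi (c u) (phi u), g2 u))); [apply RA_proper| |].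
      + intro k. unfold iswalk, wend, wv; simpl. destruct (hg (proj1_sig x k)) as [_ [_ [a b]]].
        split; [|split; auto]. rewrite hci. exists (phi (proj1_sig x k)).
        split; auto. exists (proj1_sig x k). split; auto. exists k; auto.
        rewrite b. exists k; auto.
      + intro w. destruct (hgf w) as [F hF]. destruct (hfib (phi w)) as [F2 hF2]. exists (F ++ F2).
        intros k [e|hin]; apply in_or_app.
        * right. apply hF2. simpl in e. rewrite <- e. rewrite hpp. reflexivity.
        * left. apply hF. right; auto. }
  assert (repP: forall x : RA R, exists r : RA D, eqv D (verts r) (img phi (verts x))).
  { intro x. destruct (rep_map R D phi fw K htr hl hK hoR x) as [r [h _]]. exists r; auto. }
  assert (repQ: forall (iy : I * RA D), exists r : RA R, eqv R (verts r) (img (psi (fst iy)) (verts (snd iy))) /\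
      forall k, c (proj1_sig r k) = fst iy).
  { intros [i y]. destruct (hbw i) as [hb hbl].
    destruct (rep_map D R (psi i) (bw i) K' hb hbl hK' hoD y) as [r [h1 h2]]. exists r. split; auto.
    intro k. destruct (h2 (proj1_sig r k) (ex_intro _ k eq_refl)) as [u [l [hch [_ hin]]]].
    rewrite (chain_c R c hc l (psi i u) hch _ hin). apply hcpsi. }
  destruct (fchoice _ repP) as [mP hmP].
  destruct (fchoice _ repQ) as [mQ hmQ].
  destruct (fchoice (fun (E : End R) x => proj1_sig E = ra_eq x)) as [rE hrE].
  { intros [PE [x e]]. exists x. exact e. }
  destruct (fchoice (fun (E : End D) x => proj1_sig E = ra_eq x)) as [rE' hrE'].
  { intros [PE [x e]]. exists x. exact e. }
  assert (walkyP: forall Y, walky R Y -> walky D (img phi Y)).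
  { intros Y hY. apply (walky_img R D phi fw K); auto. }
  assert (walkyQ: forall i Y, walky D Y -> walky R (img (psi i) Y)).
  { intros i Y hY. destruct (hbw i) as [hb hbl]. apply (walky_img D R (psi i) (bw i) K'); auto. }
  assert (ceq: forall (x y : RA R), ra_eq x y -> c (proj1_sig x 0) = c (proj1_sig y 0)).
  { intros x y [h _]. apply preceq_pre2 in h.
    destruct (comp_pre2 R c (verts x) (verts y) (c (proj1_sig x 0)) hc ltac:(intros u hu; unfold verts in hu; destruct hu as [k <-]; apply RA_comp; auto) h) as [u [hy hu]].
    unfold verts in hy. destruct hy as [k <-].
    rewrite <- hu. apply RA_comp; auto. }
  assert (reqE: forall V0 (R0 : digraph V0) (E : End R0) x y, proj1_sig E = ra_eq x -> proj1_sig E = ra_eq y -> ra_eq x y).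
  { intros V0 R0 E x y h1 h2. rewrite <- h1, h2. apply ra_eq_refl. }
  exists (fun E => (c (proj1_sig (rE E) 0), cls D (mP (rE E)))).
  exists (fun p => cls R (mQ (fst p, rE' (snd p)))).
  split.
  - intro E. simpl. set (x := rE E). set (i := c (proj1_sig x 0)).
    set (y := rE' (cls D (mP x))).
    assert (hy: ra_eq (mP x) y) by (apply (reqE _ D (cls D (mP x))); [reflexivity|apply hrE']).
    destruct (hmQ (i, y)) as [e1 _]. simpl in e1.
    set (r' := mQ (i, y)) in *.
    apply End_eq. rewrite (hrE E). simpl. apply ra_eq_class. apply ra_eq_eqv.
    destruct (hbw i) as [hb hbl].
    assert (e2: eqv R (img (psi i) (verts y)) (img (psi i) (verts (mP x)))).
    { apply (map_eqv D R (psi i) (bw i)); auto. apply ra_eq_eqv. apply ra_eq_sym; auto. }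
    assert (e3: eqv R (img (psi i) (verts (mP x))) (img (psi i) (img phi (verts x)))).
    { apply (map_eqv D R (psi i) (bw i)); auto. }
    assert (e4: eqv R (img (psi i) (img phi (verts x))) (verts x)).
    { apply eqv_sym. apply hclose. intro k. apply RA_comp; auto. }
    apply (eqv_trans R _ (img (psi i) (verts y))); auto. apply walkyQ; apply RA_walky.
    apply (eqv_trans R _ (img (psi i) (verts (mP x)))); auto. apply walkyQ; apply RA_walky.
    apply (eqv_trans R _ (img (psi i) (img phi (verts x)))); auto. apply walkyQ; apply walkyP; apply RA_walky.
  - intros [i E']. simpl. set (y := rE' E'). destruct (hmQ (i, y)) as [e1 e1c]. simpl in e1, e1c.
    set (r' := mQ (i, y)) in *. set (x := rE (cls R r')).
    assert (hx: ra_eq r' x) by (apply (reqE _ R (cls R r')); [reflexivity|apply hrE]).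
    assert (hc0: c (proj1_sig x 0) = i).
    { rewrite <- (e1c 0). symmetry. apply ceq. exact hx. }
    rewrite hc0. f_equal.
    apply End_eq. rewrite (hrE' E'). simpl. apply ra_eq_class. apply ra_eq_eqv.
    destruct (hbw i) as [hb hbl].
    assert (f2: eqv D (img phi (verts x)) (img phi (verts r'))).
    { apply (map_eqv R D phi fw); auto. apply ra_eq_eqv. apply ra_eq_sym; auto. }
    assert (f3: eqv D (img phi (verts r')) (img phi (img (psi i) (verts y)))).
    { apply (map_eqv R D phi fw); auto. }
    assert (f4: eqv D (img phi (verts r')) (verts y)).
    { destruct f3 as [a b]. split.
      - apply (pre2_mono D (img phi (verts r')) (img phi (verts r')) (img phi (img (psi i) (verts y))) (verts y) (fun z h => h)); [|exact a].
        intros z [u [[w [hw <-]] <-]]; rewrite hpp; exact hw.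
      - apply (pre2_mono D (img phi (img (psi i) (verts y))) (verts y) (img phi (verts r')) (img phi (verts r'))); [| |exact b].
        intros z [u [[w [hw <-]] <-]]; rewrite hpp; exact hw. exact (fun z h => h). }
    apply (eqv_trans D _ (img phi (verts x))); auto. apply walkyP; apply RA_walky.
    apply (eqv_trans D _ (img phi (verts r'))); auto. apply walkyP; apply RA_walky.
Qed.


Fixpoint steps {T} (op : T -> T -> T) (v : T) (l : list T) : list T :=
  match l with [] => [] | a :: l' => op v a :: steps op (op v a) l' end.
Fixpoint prefs {T} (op : T -> T -> T) (l : list T) : list T :=
  match l with [] => [] | a :: l' => a :: List.map (op a) (prefs op l') end.

Lemma fold_assoc {T} (op : T -> T -> T) (assoc : forall x y z, op x (op y z) = op (op x y) z) l :
  forall z b, fold_left op l (op z b) = op z (fold_left op l b).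
Proof.
  induction l as [|a l IH]; intros z b; simpl; auto. rewrite <- assoc. apply IH.
Qed.

Lemma steps_chain {T} (op : T -> T -> T) (A : list T) l : forall v, (forall a, In a l -> In a A) ->
  chain (right_cayley op A) (v :: steps op v l).
Proof.
  induction l as [|a l IH]; intros v h; simpl; auto. destruct l; simpl.
  - split; auto. exists a; split; auto. apply h; left; auto.
  - split. exists a; split; auto. apply h; left; auto.
    specialize (IH (op v a) ltac:(intros b hb; apply h; right; auto)). simpl in IH. exact IH.
Qed.

Lemma steps_last {T} (op : T -> T -> T) l : forall v, List.last (steps op v l) v = fold_left op l v.
Proof.
  induction l as [|a l IH]; intros v; auto. change (List.last (op v a :: steps op (op v a) l) v = fold_left op l (op v a)).
  rewrite last_cons. apply IH.
Qed.

Lemma steps_len {T} (op : T -> T -> T) l : forall v, length (steps op v l) = length l.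
Proof. induction l; intros; simpl; auto. Qed.

Lemma steps_in {T} (op : T -> T -> T) (assoc : forall x y z, op x (op y z) = op (op x y) z) l :
  forall v x, In x (steps op v l) -> exists d, In d (prefs op l) /\ x = op v d.
Proof.
  induction l as [|a l IH]; intros v x h; simpl in h; [tauto|].
  destruct h as [<-|h]. exists a; split; auto; left; auto.
  destruct (IH _ _ h) as [d [hd ->]]. exists (op a d). split; [right; apply in_map; auto|]. apply eq_sym, assoc.
Qed.

Lemma word_walks {T} (op : T -> T -> T) (assoc : forall x y z, op x (op y z) = op (op x y) z)
  (A : list T) (hA : sg_generates op A) (C : list T) :
  exists K (Dl : list T) (Wk : T -> T -> list T), 1 <= K /\ forall u t, In t C ->
    chain (lazy (right_cayley op A)) (u :: Wk u t) /\ List.last (Wk u t) u = op u t /\ length (Wk u t) = K /\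
    forall x, In x (Wk u t) -> exists d, In d Dl /\ x = op u d.
Proof.
  destruct (fchoice (fun t (p : T * list T) => In (fst p) A /\ Forall (fun a => In a A) (snd p) /\ t = fold_left op (snd p) (fst p))) as [word hw].
  { intro t. destruct (hA t) as [a0 [l [h1 [h2 h3]]]]. exists (a0, l). auto. }
  set (wl := fun t => fst (word t) :: snd (word t)).
  assert (hwl: forall t, (forall a, In a (wl t) -> In a A) /\ forall u, fold_left op (wl t) u = op u t).
  { intro t. destruct (hw t) as [h1 [h2 h3]]. split.
    - intros a [<-|ha]; auto. rewrite Forall_forall in h2. auto.
    - intro u. unfold wl. simpl. rewrite fold_assoc; auto. congruence. }
  set (K := S (list_max (List.map (fun t => length (wl t)) C))).
  set (pad := fun u (L : list T) => L ++ List.repeat (List.last L u) (K - length L)).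
  exists K, (flat_map (fun t => t :: prefs op (wl t)) C), (fun u t => pad u (steps op u (wl t))).
  split; [unfold K; lia|]. intros u t ht.
  destruct (hwl t) as [hA' hf].
  assert (hlen: length (steps op u (wl t)) <= K).
  { rewrite steps_len. unfold K.
    pose proof (proj1 (list_max_le (List.map (fun t => length (wl t)) C) _) (le_n _)) as hF.
    rewrite Forall_forall in hF. specialize (hF (length (wl t)) (in_map _ _ _ ht)). lia. }
  assert (hlast: List.last (steps op u (wl t)) u = op u t) by (rewrite steps_last; apply hf).
  unfold pad. split; [|split; [|split]].
  - apply chain_app. split.
    + apply (chain_mono (right_cayley op A)). intros x y h; right; auto. apply steps_chain; auto.
    + apply chain_repeat.
  - rewrite last_app, last_repeat. exact hlast.
  - rewrite length_app, repeat_length. lia.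
  - intros x hx. apply in_app_iff in hx. destruct hx as [hx|hx].
    + destruct (steps_in op assoc _ _ _ hx) as [d [hd ->]]. exists d. split; auto.
      apply in_flat_map. exists t. split; auto. right; auto.
    + apply repeat_spec in hx. rewrite hlast in hx. subst x. exists t. split; auto.
      apply in_flat_map. exists t. split; auto. left; auto.
Qed.


Lemma grp_facts {G} (mul : G -> G -> G) (e : G) (inv : G -> G)
  (mulA : forall x y z, mul x (mul y z) = mul (mul x y) z)
  (mul1g : forall x, mul e x = x) (mulVg : forall x, mul (inv x) x = e) :
  (forall x, mul x (inv x) = e) /\ (forall x, mul x e = x) /\
  (forall x y, mul (inv x) (mul x y) = y) /\ (forall x y, mul x (mul (inv x) y) = y) /\
  (forall x y, mul (mul y x) (inv x) = y) /\ (forall x y, mul (mul y (inv x)) x = y) /\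
  (forall x, inv (inv x) = x) /\ (forall x y, inv (mul x y) = mul (inv y) (inv x)).
Proof.
  assert (mulgV: forall x, mul x (inv x) = e).
  { intro x. rewrite <- (mul1g (mul x (inv x))). rewrite <- (mulVg (inv x)). rewrite <- mulA.
    rewrite (mulA (inv x) x (inv x)). rewrite mulVg, mul1g. reflexivity. }
  assert (mulg1: forall x, mul x e = x).
  { intro x. rewrite <- (mulVg x), mulA, mulgV, mul1g. reflexivity. }
  assert (mulKg: forall x y, mul (inv x) (mul x y) = y).
  { intros x y. rewrite mulA, mulVg, mul1g. reflexivity. }
  assert (mulKVg: forall x y, mul x (mul (inv x) y) = y).
  { intros x y. rewrite mulA, mulgV, mul1g. reflexivity. }
  assert (mulgK: forall x y, mul (mul y x) (inv x) = y).
  { intros x y. rewrite <- mulA, mulgV, mulg1. reflexivity. }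
  assert (mulgKV: forall x y, mul (mul y (inv x)) x = y).
  { intros x y. rewrite <- mulA, mulVg, mulg1. reflexivity. }
  assert (invK: forall x, inv (inv x) = x).
  { intro x. rewrite <- (mulg1 (inv (inv x))), <- (mulVg x), mulKg. reflexivity. }
  repeat split; auto.
  intros x y. transitivity (mul (inv (mul x y)) (mul (mul x y) (mul (inv y) (inv x)))).
  - rewrite <- (mulA x y), mulKVg, mulgV, mulg1. reflexivity.
  - apply mulKg.
Qed.

From mathcomp Require Import all_boot.
Import ListNotations.

Lemma In_mem {T : eqType} (x : T) (s : seq T) : x \in s -> List.In x s.
Proof.
  elim: s => [|y s IH] //=. rewrite in_cons => /orP [/eqP ->|h]; [left; auto|right; auto].
Qed.

Lemma In_ord n (i : 'I_n) : List.In i (ord_enum n).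
Proof. apply In_mem. apply mem_ord_enum. Qed.

Lemma right_case (G : Type) (mul : G -> G -> G) (e : G) (inv : G -> G)
  (mulA : forall x y z, mul x (mul y z) = mul (mul x y) z)
  (mul1g : forall x, mul e x = x)
  (mulVg : forall x, mul (inv x) x = e)
  (n m : nat) (n_pos : 0 < n) (m_pos : 0 < m)
  (P : 'I_m -> 'I_n -> G)
  (A : list (rees G n m)) (hA : sg_generates (rees_mul mul P) A)
  (B : list G) (hB : sg_generates mul B) :
  ends_antichain (right_cayley (rees_mul mul P) A) /\
  equipotent (End (right_cayley (rees_mul mul P) A)) ('I_n * End (right_cayley mul B))%type.
Proof.
  destruct (grp_facts mul e inv mulA mul1g mulVg) as [mulgV [mulg1 [mulKg [mulKVg [mulgK [mulgKV [invK invM]]]]]]].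
  set (opS := rees_mul mul P).
  assert (assocS: forall x y z, opS x (opS y z) = opS (opS x y) z).
  { intros [[i g] l] [[j h] mu] [[k q] nu]. simpl. rewrite !mulA. reflexivity. }
  set (eN := ord_enum n). set (eM := ord_enum m).
  set (l0 := Ordinal m_pos). set (j0 := Ordinal n_pos).
  set (CG := List.flat_map (fun l => List.map (fun a : rees G n m => mul (P l a.1.1) a.1.2) A) eM).
  set (CS2 := List.map (fun b => (j0, mul (inv (P l0 j0)) b, l0)) B).
  set (CS3 := List.map (fun l => (j0, inv (P l j0), l0)) eM).
  set (CS4 := List.map (fun l => (j0, inv (P l0 j0), l)) eM).
  set (CS5 := List.flat_map (fun mu => List.flat_map (fun l => List.map (fun a : rees G n m =>
               (j0, mul (inv (P mu j0)) (inv (mul (P l a.1.1) a.1.2)), l)) A) eM) eM).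
  destruct (word_walks mul mulA B hB CG) as [KG [DG [WG [hKG hWG]]]].
  destruct (word_walks opS assocS A hA (CS2 ++ CS3 ++ CS4 ++ CS5)) as [KS [DS [WS [hKS hWS]]]].
  set (rtfS := fun x : rees G n m => List.flat_map (fun d : rees G n m => List.map (fun l => (x.1.1, mul x.1.2 (inv (mul (P l d.1.1) d.1.2)), l)) eM) DS).
  assert (hrtf: forall u d x, List.In d DS -> x = opS u d -> List.In u (rtfS x)).
  { intros [[i g] l] [[j h] mu] x hd ->. apply in_flat_map. exists (j, h, mu). split; auto.
    apply in_map_iff. exists l. split; [|apply In_ord]. simpl. rewrite <- (mulA g (P l j) h), mulgK. reflexivity. }
  assert (cancel3: forall x p y, mul (mul x p) (mul (inv p) (mul (inv x) y)) = y).
  { intros x p y. rewrite <- (mulA x p), !mulKVg. reflexivity. }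
  set (CS := CS2 ++ CS3 ++ CS4 ++ CS5) in hWS.
  assert (hCG: forall u a, In a A -> In (mul (inv u.1.2) (opS u a).1.2) CG).
  { intros [[i g] l] [[j h] mu] ha. simpl. rewrite <- (mulA g (P l j) h), mulKg.
    apply in_flat_map. exists l. split; [apply In_ord|]. apply in_map_iff. exists (j,h,mu). split; auto. }
  assert (hCS2: forall w b, In b B -> In (j0, mul (inv (P l0 j0)) (mul (inv w) (mul w b)), l0) CS).
  { intros w b hb. rewrite mulKg. apply in_or_app; left. apply in_map_iff. exists b. split; auto. }
  assert (hCS3: forall l, In (j0, inv (P l j0), l0) CS).
  { intro l. apply in_or_app; right; apply in_or_app; left. apply in_map_iff. exists l. split; auto. apply In_ord. }
  assert (hCS4: forall l, In (j0, inv (P l0 j0), l) CS).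
  { intro l. apply in_or_app; right; apply in_or_app; right; apply in_or_app; left. apply in_map_iff. exists l. split; auto. apply In_ord. }
  set (tb := fun u v : rees G n m => (j0, mul (inv (P v.2 j0)) (mul (inv v.1.2) u.1.2), u.2)).
  assert (hCS5: forall u a, In a A -> In (tb u (opS u a)) CS).
  { intros [[i g] l] [[j h] mu] ha. unfold tb. simpl. rewrite <- (mulA g (P l j) h), invM, mulgKV.
    apply in_or_app; right; apply in_or_app; right; apply in_or_app; right.
    apply in_flat_map. exists mu. split; [apply In_ord|]. apply in_flat_map. exists l. split; [apply In_ord|].
    apply in_map_iff. exists (j,h,mu). split; auto. }
  assert (hback: forall u a, opS (opS u a) (tb u (opS u a)) = u).
  { intros [[i g] l] [[j h] mu]. unfold tb. simpl. rewrite cancel3. reflexivity. }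
  apply (abstract_ends (right_cayley opS A) (right_cayley mul B) (fun u => u.1.1) (fun u => u.1.2)
    (fun i w => (i, w, l0)) (fun u v => WG u.1.2 (mul (inv u.1.2) v.1.2)) KG
    (fun i w w' => WS (i, w, l0) (j0, mul (inv (P l0 j0)) (mul (inv w) w'), l0)) KS
    (fun u => WS u (j0, inv (P u.2 j0), l0)) (fun u => WS (u.1.1, u.1.2, l0) (j0, inv (P l0 j0), u.2))
    (fun u v => WS v (tb u v))).
  - split; [|split].
    + intros u v [a [ha ->]]. destruct (hWG u.1.2 _ (hCG u a ha)) as [h1 [h2 _]].
      split; [exact h1|]. rewrite h2. apply mulKVg.
    + intro x. set (F1 := List.flat_map (fun i => List.flat_map (fun d => List.map (fun l => (i, mul x (inv d), l)) eM) DG) eN).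
      exists (F1 ++ List.flat_map (fun u => List.map (opS u) A) F1).
      intros u v [a [ha ->]] hx.
      destruct (hWG u.1.2 _ (hCG u a ha)) as [_ [_ [_ h4]]]. destruct (h4 x hx) as [d [hd hxd]].
      assert (hu: In u F1).
      { destruct u as [[i g] l]. simpl in hxd. apply in_flat_map. exists i. split; [apply In_ord|].
        apply in_flat_map. exists d. split; auto. apply in_map_iff. exists l. split; [|apply In_ord].
        rewrite hxd mulgK. reflexivity. }
      split; apply in_or_app; [left; auto|right]. apply in_flat_map. exists u. split; auto. apply in_map. auto.
    + intro w. exists (List.flat_map (fun i => List.map (fun l => (i, w, l)) eM) eN).
      intros [[i g] l] hw. simpl in hw. subst. apply in_flat_map. exists i. split; [apply In_ord|].
      apply in_map_iff. exists l. split; auto. apply In_ord.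
  - intros u v [a [ha ->]]. apply (hWG _ _ (hCG u a ha)).
  - exact hKG.
  - intro i. split; [split; [|split]|].
    + intros w w' [b [hb ->]]. destruct (hWS (i,w,l0) _ (hCS2 w b hb)) as [h1 [h2 _]].
      split; [exact h1|]. rewrite h2. simpl. rewrite cancel3. reflexivity.
    + intro x. set (LW := List.map (fun d : rees G n m => mul x.1.2 (inv (mul (P l0 d.1.1) d.1.2))) DS).
      exists (LW ++ List.flat_map (fun w => List.map (mul w) B) LW).
      intros w w' [b [hb ->]] hx. destruct (hWS (i,w,l0) _ (hCS2 w b hb)) as [_ [_ [_ h4]]].
      destruct (h4 x hx) as [[[j h] mu] [hd ->]].
      assert (hw: In w LW).
      { apply in_map_iff. exists (j,h,mu). split; auto. simpl. rewrite <- (mulA w (P l0 j) h), mulgK. reflexivity. }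
      split; apply in_or_app; [left; auto|right]. apply in_flat_map. exists w. split; auto. apply in_map; auto.
    + intro x. exists [x.1.2]. intros w <-. left; reflexivity.
    + intros w w' [b [hb ->]]. apply (hWS (i,w,l0) _ (hCS2 w b hb)).
  - exact hKS.
  - intro v. exists (List.map (opS v) A). intros u [a [ha ->]]. apply in_map; auto.
  - intro v. exists (List.map (mul v) B). intros u [b [hb ->]]. apply in_map; auto.
  - intros [[i g] l] v [[[j h] mu] [ha ->]]. reflexivity.
  - reflexivity.
  - reflexivity.
  - intros [[i g] l].
    destruct (hWS (i,g,l) _ (hCS3 l)) as [a1 [a2 _]]. destruct (hWS (i,g,l0) _ (hCS4 l)) as [b1 [b2 _]].
    simpl. split; [exact a1|split; [|split; [exact b1|]]].
    + rewrite a2. simpl. rewrite mulgK. reflexivity.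
    + rewrite b2. simpl. rewrite mulgK. reflexivity.
  - intro x. exists (rtfS x ++ List.flat_map (fun y => List.map (fun l => (y.1.1, y.1.2, l)) eM) (rtfS x)).
    intros [[i g] l] [hx|hx]; simpl in hx.
    + destruct (hWS (i,g,l) _ (hCS3 l)) as [_ [_ [_ h4]]]. destruct (h4 x hx) as [d [hd hxd]].
      apply in_or_app; left. apply (hrtf _ d x hd hxd).
    + destruct (hWS (i,g,l0) _ (hCS4 l)) as [_ [_ [_ h4]]]. destruct (h4 x hx) as [d [hd hxd]].
      apply in_or_app; right. apply in_flat_map. exists (i,g,l0). split; [apply (hrtf _ d x hd hxd)|].
      apply in_map_iff. exists l. split; [reflexivity|apply In_ord].
  - split.
    + intros u v [a [ha ->]]. destruct (hWS (opS u a) _ (hCS5 u a ha)) as [h1 [h2 _]].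
      split; [exact h1|]. rewrite h2. apply hback.
    + intro x. set (Fv := x :: rtfS x). exists (Fv ++ List.flat_map (fun v => List.map (opS v) CS) Fv).
      intros u v [a [ha ->]] hx.
      assert (hv: In (opS u a) Fv).
      { destruct hx as [hx|hx]; [left; auto|]. right. destruct (hWS (opS u a) _ (hCS5 u a ha)) as [_ [_ [_ h4]]].
        destruct (h4 x hx) as [d [hd hxd]]. apply (hrtf _ d x hd hxd). }
      split; apply in_or_app; [right|left; auto]. apply in_flat_map. exists (opS u a). split; auto.
      apply in_map_iff. exists (tb u (opS u a)). split; [apply hback|apply hCS5; auto].
Qed.

Lemma sg_gen_op {T} (op : T -> T -> T) (assoc : forall x y z, op x (op y z) = op (op x y) z) A :
  sg_generates op A -> sg_generates (fun x y => op y x) A.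
Proof.
  intros H x. destruct (H x) as [a0 [l [h1 [h2 ->]]]]. clear H.
  assert (assoc': forall x y z, (fun x y => op y x) x ((fun x y => op y x) y z) = (fun x y => op y x) ((fun x y => op y x) x y) z).
  { intros. simpl. symmetry; apply assoc. }
  induction l as [|z l IH] using rev_ind.
  - exists a0, nil. simpl. auto.
  - rewrite Forall_app in h2. destruct h2 as [h2 h3]. destruct (IH h2) as [b0 [l' [k1 [k2 k3]]]].
    exists z, (b0 :: l'). split; [inversion h3; auto|split; [constructor; auto|]].
    rewrite fold_left_app. simpl. rewrite (fold_assoc (fun x y => op y x) assoc'). rewrite <- k3. reflexivity.
Qed.

Lemma left_case (G : Type) (mul : G -> G -> G) (e : G) (inv : G -> G)
  (mulA : forall x y z, mul x (mul y z) = mul (mul x y) z)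
  (mul1g : forall x, mul e x = x)
  (mulVg : forall x, mul (inv x) x = e)
  (n m : nat) (n_pos : 0 < n) (m_pos : 0 < m)
  (P : 'I_m -> 'I_n -> G)
  (A : list (rees G n m)) (hA : sg_generates (rees_mul mul P) A)
  (B : list G) (hB : sg_generates mul B) :
  ends_antichain (left_cayley (rees_mul mul P) A) /\
  equipotent (End (left_cayley (rees_mul mul P) A)) ('I_m * End (right_cayley mul B))%type.
Proof.
  destruct (grp_facts mul e inv mulA mul1g mulVg) as [mulgV [mulg1 [mulKg [mulKVg [mulgK [mulgKV [invK invM]]]]]]].
  set (opS := rees_mul mul P).
  assert (assocS: forall x y z, opS x (opS y z) = opS (opS x y) z).
  { intros [[i g] l] [[j h] mu] [[k q] nu]. simpl. rewrite !mulA. reflexivity. }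
  set (opS' := fun x y => opS y x).
  assert (assocS': forall x y z, opS' x (opS' y z) = opS' (opS' x y) z).
  { intros. unfold opS'. symmetry; apply assocS. }
  assert (hA' : sg_generates opS' A) by (apply sg_gen_op; auto).
  change (left_cayley opS A) with (right_cayley opS' A).
  set (eN := ord_enum n). set (eM := ord_enum m).
  set (m0 := Ordinal m_pos). set (i0 := Ordinal n_pos).
  set (CG := List.flat_map (fun i => List.map (fun a : rees G n m => inv (mul a.1.2 (P a.2 i))) A) eN).
  set (CS2 := List.map (fun b => (i0, mul (inv b) (inv (P m0 i0)), m0)) B).
  set (CS3 := List.map (fun i => (i0, inv (P m0 i), m0)) eN).
  set (CS4 := List.map (fun i => (i, inv (P m0 i0), m0)) eN).
  set (CS5 := List.flat_map (fun i => List.map (fun a : rees G n m =>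
               (i, mul (inv (mul a.1.2 (P a.2 i))) (inv (P m0 a.1.1)), m0)) A) eN).
  destruct (word_walks mul mulA B hB CG) as [KG [DG [WG [hKG hWG]]]].
  destruct (word_walks opS' assocS' A hA' (CS2 ++ CS3 ++ CS4 ++ CS5)) as [KS [DS [WS [hKS hWS]]]].
  set (CS := CS2 ++ CS3 ++ CS4 ++ CS5) in hWS.
  set (rtfS := fun x : rees G n m => List.flat_map (fun d : rees G n m => List.map (fun i => (i, mul (inv (mul d.1.2 (P d.2 i))) x.1.2, x.2)) eN) DS).
  assert (hrtf: forall u d x, List.In d DS -> x = opS' u d -> List.In u (rtfS x)).
  { intros [[i g] l] [[j h] mu] x hd ->. apply in_flat_map. exists (j, h, mu). split; auto.
    apply in_map_iff. exists i. split; [|apply In_ord]. unfold opS'. simpl. rewrite mulKg. reflexivity. }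
  assert (hCG: forall u a, In a A -> In (mul (inv (inv u.1.2)) (inv (opS a u).1.2)) CG).
  { intros [[i g] l] [[j h] mu] ha. simpl. rewrite invK invM mulKVg.
    apply in_flat_map. exists i. split; [apply In_ord|]. apply in_map_iff. exists (j,h,mu). split; auto. }
  set (tw := fun w w' => (i0, mul (mul (inv w') w) (inv (P m0 i0)), m0)).
  assert (hCS2: forall w b, In b B -> In (tw w (mul w b)) CS).
  { intros w b hb. unfold tw. rewrite invM mulgKV. apply in_or_app; left. apply in_map_iff. exists b. split; auto. }
  assert (hbwl: forall l w w', opS' (i0, inv w, l) (tw w w') = (i0, inv w', l)).
  { intros l w w'. unfold opS', tw. simpl. rewrite mulgKV mulgK. reflexivity. }
  assert (hCS3: forall i, In (i0, inv (P m0 i), m0) CS).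
  { intro i. apply in_or_app; right; apply in_or_app; left. apply in_map_iff. exists i. split; auto. apply In_ord. }
  assert (hCS4: forall i, In (i, inv (P m0 i0), m0) CS).
  { intro i. apply in_or_app; right; apply in_or_app; right; apply in_or_app; left. apply in_map_iff. exists i. split; auto. apply In_ord. }
  set (tb := fun u v : rees G n m => (u.1.1, mul (mul u.1.2 (inv v.1.2)) (inv (P m0 v.1.1)), m0)).
  assert (hCS5: forall u a, In a A -> In (tb u (opS a u)) CS).
  { intros [[i g] l] [[j h] mu] ha. unfold tb. simpl. rewrite invM mulKVg.
    apply in_or_app; right; apply in_or_app; right; apply in_or_app; right.
    apply in_flat_map. exists i. split; [apply In_ord|]. apply in_map_iff. exists (j,h,mu). split; auto. }
  assert (hback: forall u a, opS' (opS a u) (tb u (opS a u)) = u).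
  { intros [[i g] l] [[j h] mu]. unfold opS', tb. simpl. rewrite mulgKV mulgKV. reflexivity. }
  apply (abstract_ends (right_cayley opS' A) (right_cayley mul B) (fun u => u.2) (fun u => inv u.1.2)
    (fun l w => (i0, inv w, l)) (fun u v => WG (inv u.1.2) (mul (inv (inv u.1.2)) (inv v.1.2))) KG
    (fun l w w' => WS (i0, inv w, l) (tw w w')) KS
    (fun u => WS u (i0, inv (P m0 u.1.1), m0)) (fun u => WS (i0, inv (inv u.1.2), u.2) (u.1.1, inv (P m0 i0), m0))
    (fun u v => WS v (tb u v))).
  - split; [|split].
    + intros u v [a [ha ->]]. destruct (hWG (inv u.1.2) _ (hCG u a ha)) as [h1 [h2 _]].
      split; [exact h1|]. rewrite h2. apply mulKVg.
    + intro x. set (F1 := List.flat_map (fun i => List.flat_map (fun d => List.map (fun l => (i, inv (mul x (inv d)), l)) eM) DG) eN).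
      exists (F1 ++ List.flat_map (fun u => List.map (opS' u) A) F1).
      intros u v [a [ha ->]] hx.
      destruct (hWG (inv u.1.2) _ (hCG u a ha)) as [_ [_ [_ h4]]]. destruct (h4 x hx) as [d [hd hxd]].
      assert (hu: In u F1).
      { destruct u as [[i g] l]. simpl in hxd. apply in_flat_map. exists i. split; [apply In_ord|].
        apply in_flat_map. exists d. split; auto. apply in_map_iff. exists l. split; [|apply In_ord].
        rewrite hxd mulgK invK. reflexivity. }
      split; apply in_or_app; [left; auto|right]. apply in_flat_map. exists u. split; auto. apply in_map. auto.
    + intro w. exists (List.flat_map (fun i => List.map (fun l => (i, inv w, l)) eM) eN).
      intros [[i g] l] hw. simpl in hw. subst. apply in_flat_map. exists i. split; [apply In_ord|].
      apply in_map_iff. exists l. split; [rewrite invK; reflexivity|]. apply In_ord.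
  - intros u v [a [ha ->]]. apply (hWG (inv u.1.2) _ (hCG u a ha)).
  - exact hKG.
  - intro l. split; [split; [|split]|].
    + intros w w' [b [hb ->]]. destruct (hWS (i0, inv w, l) _ (hCS2 w b hb)) as [h1 [h2 _]].
      split; [exact h1|]. rewrite h2. apply hbwl.
    + intro x. set (LW := List.map (fun d : rees G n m => inv (mul (inv (mul d.1.2 (P d.2 i0))) x.1.2)) DS).
      exists (LW ++ List.flat_map (fun w => List.map (mul w) B) LW).
      intros w w' [b [hb ->]] hx. destruct (hWS (i0, inv w, l) _ (hCS2 w b hb)) as [_ [_ [_ h4]]].
      destruct (h4 x hx) as [[[j h] mu] [hd ->]].
      assert (hw: In w LW).
      { apply in_map_iff. exists (j,h,mu). split; auto. unfold opS'. simpl. rewrite mulKg invK. reflexivity. }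
      split; apply in_or_app; [left; auto|right]. apply in_flat_map. exists w. split; auto. apply in_map; auto.
    + intro x. exists [inv x.1.2]. intros w <-. left. simpl. rewrite invK. reflexivity.
    + intros w w' [b [hb ->]]. apply (hWS (i0, inv w, l) _ (hCS2 w b hb)).
  - exact hKS.
  - intro v. exists (List.map (opS' v) A). intros u [a [ha ->]]. apply in_map; auto.
  - intro v. exists (List.map (mul v) B). intros u [b [hb ->]]. apply in_map; auto.
  - intros [[i g] l] v [[[j h] mu] [ha ->]]. reflexivity.
  - reflexivity.
  - intros. simpl. apply invK.
  - intros [[i g] l].
    destruct (hWS (i,g,l) _ (hCS3 i)) as [a1 [a2 _]]. destruct (hWS (i0, inv (inv g), l) _ (hCS4 i)) as [b1 [b2 _]].
    simpl. split; [exact a1|split; [|split; [exact b1|]]].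
    + rewrite a2. unfold opS'. simpl. rewrite mulVg mul1g invK. reflexivity.
    + rewrite b2. unfold opS'. simpl. rewrite mulVg mul1g invK. reflexivity.
  - intro x. exists (rtfS x ++ List.flat_map (fun y => List.map (fun i => (i, y.1.2, y.2)) eN) (rtfS x)).
    intros [[i g] l] [hx|hx]; simpl in hx.
    + destruct (hWS (i,g,l) _ (hCS3 i)) as [_ [_ [_ h4]]]. destruct (h4 x hx) as [d [hd hxd]].
      apply in_or_app; left. apply (hrtf _ d x hd hxd).
    + destruct (hWS (i0, inv (inv g), l) _ (hCS4 i)) as [_ [_ [_ h4]]]. destruct (h4 x hx) as [d [hd hxd]].
      apply in_or_app; right. apply in_flat_map. exists (i0, inv (inv g), l). split; [apply (hrtf _ d x hd hxd)|].
      apply in_map_iff. exists i. split; [simpl; rewrite invK; reflexivity|apply In_ord].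
  - split.
    + intros u v [a [ha ->]]. destruct (hWS (opS' u a) _ (hCS5 u a ha)) as [h1 [h2 _]].
      split; [exact h1|]. rewrite h2. apply hback.
    + intro x. set (Fv := x :: rtfS x). exists (Fv ++ List.flat_map (fun v => List.map (opS' v) CS) Fv).
      intros u v [a [ha ->]] hx.
      assert (hv: In (opS' u a) Fv).
      { destruct hx as [hx|hx]; [left; auto|]. right. destruct (hWS (opS' u a) _ (hCS5 u a ha)) as [_ [_ [_ h4]]].
        destruct (h4 x hx) as [d [hd hxd]]. apply (hrtf _ d x hd hxd). }
      split; apply in_or_app; [right|left; auto]. apply in_flat_map. exists (opS' u a). split; auto.
      apply in_map_iff. exists (tb u (opS' u a)). split; [apply hback|apply hCS5; auto].
Qed.

Theorem mainTheorem18
  (G : Type) (mul : G -> G -> G) (e : G) (inv : G -> G)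
  (mulA : forall x y z, mul x (mul y z) = mul (mul x y) z)
  (mul1g : forall x, mul e x = x)
  (mulVg : forall x, mul (inv x) x = e)
  (G_fg : exists B : list G, sg_generates mul B)
  (n m : nat) (n_pos : 0 < n) (m_pos : 0 < m)
  (P : 'I_m -> 'I_n -> G)
  (A : list (rees G n m)) (hA : sg_generates (rees_mul mul P) A)
  (B : list G) (hB : sg_generates mul B) :
  (ends_antichain (right_cayley (rees_mul mul P) A) /\
   equipotent (End (right_cayley (rees_mul mul P) A))
              ('I_n * End (right_cayley mul B))%type) /\
  (ends_antichain (left_cayley (rees_mul mul P) A) /\
   equipotent (End (left_cayley (rees_mul mul P) A))
              ('I_m * End (right_cayley mul B))%type).
Proof.
  split.
  - exact (right_case G mul e inv mulA mul1g mulVg n m n_pos m_pos P A hA B hB).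
  - exact (left_case G mul e inv mulA mul1g mulVg n m n_pos m_pos P A hA B hB).
Qed.
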